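(* Let $\lambda \geq 0$ and $0\leq\beta<1$. Let $f(z)=z+\sum_{k=2}^{\infty}a_kz^k$ belong to $\Theta_{\Sigma}(1,\lambda,0,0;\beta)$ (the case $\tau=1$, $\gamma=\delta=0$). Then $$|a_2| \leq \min\left\{\frac{2(1-\beta)}{1+\lambda},\ \sqrt{\frac{2(1-\beta)}{1+2\lambda}}\right\}\quad\text{and}\quad |a_3| \leq \frac{2(1-\beta)}{1+2\lambda}.$$
   Context: Let $\mathbb{U}=\{z\in\mathbb{C}:|z|<1\}$. $\Sigma$ denotes the class of bi-univalent functions: functions $f(z)=z+\sum_{k=2}^\infty a_kz^k$ analytic and univalent in $\mathbb{U}$ whose inverse $f^{-1}$ extends to a univalent function $g$ on $\mathbb{U}$; this $g$ has the expansion $g(w)=w-a_2w^2+(2a_2^2-a_3)w^3-\cdots$. For $\delta\in\mathbb{N}_0$ and $h(z)=z+\sum_{k\ge2}c_kz^k$ analytic in $\mathbb{U}$, the Ruscheweyh derivative is $\mathcal{R}^\delta h(z)=z+\sum_{k=2}^{\infty}\frac{\Gamma(\delta+k)}{\Gamma(k)\Gamma(\delta+1)}c_kz^k$ (for $\delta=0$ it is the identity). For such $h$ and parameters $\lambda,\gamma,\tau\neq0,\delta$, put $$J_h(z)=1+\frac{1}{\tau}\Big[(1-\lambda)(1-\gamma)\frac{\mathcal{R}^\delta h(z)}{z}+(\lambda(\gamma+1)+\gamma)(\mathcal{R}^\delta h)'(z)+\lambda\gamma\big(z(\mathcal{R}^\delta h)''(z)-2\big)-1\Big].$$ For $0\le\beta<1$,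 $\Theta_{\Sigma}(\tau,\lambda,\gamma,\delta;\beta)$ is the set of $f\in\Sigma$ such that $\operatorname{Re}J_f(z)>\beta$ for all $z\in\mathbb{U}$ and $\operatorname{Re}J_g(w)>\beta$ for all $w\in\mathbb{U}$, where $g$ is the extension of $f^{-1}$ to $\mathbb{U}$. *)

(* Defs.v *)
From Stdlib Require Import Reals Factorial.
From Coquelicot Require Import Coquelicot.
Open Scope R_scope.

Definition analytic_U (h : C -> C) (c : nat -> C) : Prop :=
  forall z : C, Cmod z < 1 -> is_pseries c z (h z).

Definition univalent_U (h : C -> C) : Prop :=
  forall z w : C, Cmod z < 1 -> Cmod w < 1 -> h z = h w -> z = w.

(* The class Sigma of bi-univalent functions, with Taylor coefficients a:
   f(z) = z + sum_{k>=2} a_k z^k analytic and univalent in U, and f^{-1}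
   (defined on f(U)) extends to a univalent analytic g on U. *)
Definition in_Sigma_with (f g : C -> C) (a : nat -> C) : Prop :=
  analytic_U f a /\ a 0%nat = 0%C /\ a 1%nat = 1%C /\ univalent_U f /\
  (exists b : nat -> C, analytic_U g b) /\ univalent_U g /\
  (forall z : C, Cmod z < 1 -> Cmod (f z) < 1 -> g (f z) = z).

(* Coefficients of the Ruscheweyh derivative R^delta h, h(z)=z+sum c_k z^k:
   Gamma(delta+k)/(Gamma(k) Gamma(delta+1)) = (delta+k-1)!/((k-1)! delta!). *)
Definition rusch_coef (delta : nat) (c : nat -> C) (k : nat) : C :=
  match k with
  | O => 0%C
  | S O => 1%C
  | S k' => (RtoC (INR (fact (delta + k')) / (INR (fact k') * INR (fact delta)))
             * c k)%C
  end.

(* R^delta h(z)/z, with its removable singularity at 0 filled by its limit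
   (R^delta h)'(0). *)
Definition quot_z (H H1 : C -> C) (z : C) : C :=
  if Ceq_dec z 0%C then H1 0%C else (H z / z)%C.

(* J_h(z), given H = R^delta h, H1 = (R^delta h)', H2 = (R^delta h)''. *)
Definition J_val (tau : C) (lam gam : R) (H H1 H2 : C -> C) (z : C) : C :=
  (1 + / tau * (RtoC ((1 - lam) * (1 - gam)) * quot_z H H1 z
               + RtoC (lam * (gam + 1) + gam) * H1 z
               + RtoC (lam * gam) * (z * H2 z - 2) - 1))%C.

Definition J_cond (tau : C) (lam gam : R) (delta : nat) (beta : R)
  (h : C -> C) : Prop :=
  exists (c : nat -> C) (H H1 H2 : C -> C),
    analytic_U h c /\
    analytic_U H (rusch_coef delta c) /\
    (forall z, Cmod z < 1 -> is_derive H z (H1 z)) /\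
    (forall z, Cmod z < 1 -> is_derive H1 z (H2 z)) /\
    (forall z, Cmod z < 1 -> Re (J_val tau lam gam H H1 H2 z) > beta).

Definition in_Theta (tau : C) (lam gam : R) (delta : nat) (beta : R)
  (f : C -> C) (a : nat -> C) : Prop :=
  exists g : C -> C, in_Sigma_with f g a /\
    J_cond tau lam gam delta beta f /\ J_cond tau lam gam delta beta g.

(* Main.v *)
Require Import Defs.
From Stdlib Require Import Reals.
From Coquelicot Require Import Coquelicot.
From Stdlib Require Import Lra Lia Psatz.
Open Scope R_scope.

Lemma sum_n_Re (a : nat -> C) n : sum_n (fun k => Re (a k)) n = Re (sum_n a n).
Proof.
  induction n.
  - rewrite !sum_O. reflexivity.
  - rewrite !sum_Sn, IHn. reflexivity.
Qed.
Lemma sum_n_Im (a : nat -> C) n : sum_n (fun k => Im (a k)) n = Im (sum_n a n).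
Proof.
  induction n.
  - rewrite !sum_O. reflexivity.
  - rewrite !sum_Sn, IHn. reflexivity.
Qed.

Lemma filterlim_Re (l : C) : filterlim Re (locally l) (locally (Re l)).
Proof.
  intros P [eps H]. exists eps. intros y Hy. apply H. destruct Hy as [H1 H2]. exact H1.
Qed.
Lemma filterlim_Im (l : C) : filterlim Im (locally l) (locally (Im l)).
Proof.
  intros P [eps H]. exists eps. intros y Hy. apply H. destruct Hy as [H1 H2]. exact H2.
Qed.

Lemma re_series (a : nat -> C) (l : C) :
  is_series a l -> is_series (fun n => Re (a n)) (Re l).
Proof.
  unfold is_series. intros H.
  eapply filterlim_ext. intros n. symmetry. apply sum_n_Re.
  eapply filterlim_comp. exact H. apply filterlim_Re.
Qed.
Lemma im_series (a : nat -> C) (l : C) :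
  is_series a l -> is_series (fun n => Im (a n)) (Im l).
Proof.
  unfold is_series. intros H.
  eapply filterlim_ext. intros n. symmetry. apply sum_n_Im.
  eapply filterlim_comp. exact H. apply filterlim_Im.
Qed.

Lemma pow_n_C (x : C) n : pow_n x n = Cpow x n.
Proof. induction n; simpl; auto. Qed.

Lemma Cmod_le_ReIm (z : C) : Cmod z <= Rabs (Re z) + Rabs (Im z).
Proof.
  destruct z as [x y]. unfold Cmod, Re, Im; simpl.
  rewrite <- (sqrt_Rsqr (Rabs x + Rabs y)) by (pose proof (Rabs_pos x); pose proof (Rabs_pos y); lra).
  apply sqrt_le_1_alt. unfold Rsqr.
  pose proof (Rabs_pos x); pose proof (Rabs_pos y).
  pose proof (pow2_abs x); pose proof (pow2_abs y). simpl in *. nra.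
Qed.

Lemma series_norm_bound (a : nat -> C) (l : C) (b : nat -> R) :
  is_series a l -> (forall m, Cmod (a m) <= b m) -> ex_series b ->
  Cmod l <= 2 * Series b.
Proof.
  intros Hl Hb Heb.
  assert (Hre := re_series _ _ Hl). assert (Him := im_series _ _ Hl).
  apply is_series_unique in Hre. apply is_series_unique in Him.
  assert (E1 : ex_series (fun n => Rabs (Re (a n)))).
  { apply (@ex_series_le R_AbsRing R_CompleteNormedModule _ b); auto. intros n. unfold norm; simpl. unfold abs; simpl.
    rewrite Rabs_Rabsolu. eapply Rle_trans. apply re_le_Cmod. auto. }
  assert (E2 : ex_series (fun n => Rabs (Im (a n)))).
  { apply (@ex_series_le R_AbsRing R_CompleteNormedModule _ b); auto. intros n. unfold norm; simpl. unfold abs; simpl.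
    rewrite Rabs_Rabsolu. eapply Rle_trans. 2: apply Hb.
    destruct (a n) as [x y]. unfold Im, Cmod; simpl. rewrite <- sqrt_Rsqr_abs. apply sqrt_le_1_alt.
    unfold Rsqr. nra. }
  assert (B1 : Rabs (Re l) <= Series b).
  { rewrite <- Hre. eapply Rle_trans. apply Series_Rabs; auto. apply Series_le; auto.
    intros n; split. apply Rabs_pos. eapply Rle_trans. apply re_le_Cmod. auto. }
  assert (B2 : Rabs (Im l) <= Series b).
  { rewrite <- Him. eapply Rle_trans. apply Series_Rabs; auto. apply Series_le; auto.
    intros n; split. apply Rabs_pos. eapply Rle_trans. 2: apply Hb.
    destruct (a n) as [x y]. unfold Im, Cmod; simpl. rewrite <- sqrt_Rsqr_abs. apply sqrt_le_1_alt.
    unfold Rsqr. nra. }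
  pose proof (Cmod_le_ReIm l). lra.
Qed.

Lemma series_terms_bounded (a : nat -> C) (l : C) :
  is_series a l -> exists M, forall n, Cmod (a n) <= M.
Proof.
  intros H. destruct (filterlim_bounded (sum_n a)) as [M HM].
  { exists l. exact H. }
  exists (2 * M). intros n. destruct n.
  - specialize (HM 0%nat). rewrite sum_O in HM.
    unfold norm in HM; simpl in HM. pose proof (Cmod_ge_0 (a 0%nat)). lra.
  - assert (E : a (S n) = (sum_n a (S n) - sum_n a n)%C).
    { rewrite sum_Sn. change (plus (sum_n a n) (a (S n))) with (Cplus (sum_n a n) (a (S n))). ring. }
    rewrite E. eapply Rle_trans. 
    { unfold Cminus. eapply Rle_trans. apply Cmod_triangle. rewrite Cmod_opp. apply Rle_refl. }
    pose proof (HM (S n)). pose proof (HM n). unfold norm in *; simpl in *. lra.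
Qed.

Lemma coef_bound (h : C -> C) (e : nat -> C) : analytic_U h e ->
  exists M, 0 <= M /\ forall n, Cmod (e n) <= M * (4/3)^n.
Proof.
  intros Ha.
  assert (H34 : Cmod (RtoC (3/4)) < 1) by (rewrite Cmod_R, Rabs_pos_eq; lra).
  destruct (series_terms_bounded _ _ (Ha _ H34)) as [M HM].
  exists M. split.
  { eapply Rle_trans. 2: apply (HM 0%nat). apply Cmod_ge_0. }
  intros n. specialize (HM n).
  change (scal (pow_n (RtoC (3/4)) n) (e n)) with (Cmult (pow_n (RtoC (3/4)) n) (e n)) in HM.
  rewrite pow_n_C, Cmod_mult, Cmod_pow, Cmod_R, Rabs_pos_eq in HM by lra.
  assert (P : 0 < (3/4)^n) by (apply pow_lt; lra).
  assert (E : (4/3)^n * (3/4)^n = 1).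
  { rewrite <- Rpow_mult_distr. replace (4/3*(3/4)) with 1 by field. apply pow1. }
  pose proof (Cmod_ge_0 (e n)).
  assert (0 < (4/3)^n) by (apply pow_lt; lra).
  replace (Cmod (e n)) with ((4/3)^n * ((3/4)^n * Cmod (e n))) by (rewrite <- Rmult_assoc, E; ring).
  rewrite (Rmult_comm M). apply Rmult_le_compat_l; lra.
Qed.

Lemma T4 (h : C -> C) (e : nat -> C) : analytic_U h e ->
  exists K, forall z, 0 < Cmod z <= 1/2 ->
    Cmod (h z - (e 0%nat + e 1%nat * z + e 2%nat * z^2 + e 3%nat * z^3))%C <= K * Cmod z ^ 4.
Proof.
  intros Ha. destruct (coef_bound _ _ Ha) as [M [HM0 HM]].
  exists (6 * (M * (4/3)^4)). intros z [Hz1 Hz2].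
  pose (a := fun k => (z^k * e k)%C).
  assert (Hs : is_series a (h z)).
  { eapply is_series_ext. 2: apply (Ha z); lra. intros n. unfold a. rewrite <- pow_n_C. reflexivity. }
  assert (HS : sum_n a 3 = (e 0%nat + e 1%nat * z + e 2%nat * z^2 + e 3%nat * z^3)%C).
  { rewrite !sum_Sn, sum_O. unfold a. simpl. change plus with Cplus. simpl. ring. }
  assert (Hs4 : is_series (fun k => a (4+k)%nat) (h z - sum_n a 3)%C).
  { apply is_series_incr_n. lia. simpl. change plus with Cplus.
    assert (Eq : forall u v : C, (u - v + v = u)%C) by (intros; ring). rewrite Eq. exact Hs. }
  apply (is_series_scal (/ z^4)%C) in Hs4.
  set (b := fun k:nat => (M * (4/3)^4) * (2/3)^k).
  assert (Hb : is_series b ((M * (4/3)^4) * 3)).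
  { assert (E3 : M * (4/3)^4 * 3 = M*(4/3)^4 * / (1 - 2/3)) by field. rewrite E3. unfold b.
    apply (@is_series_scal R_AbsRing R_NormedModule). apply is_series_geom. rewrite Rabs_pos_eq; lra. }
  assert (Hz0 : z <> 0%C). { intros E. rewrite E, Cmod_0 in Hz1. lra. }
  assert (Hz4 : (z^4)%C <> 0%C). { intros E. apply (f_equal Cmod) in E. rewrite Cmod_pow, Cmod_0 in E.
    assert (0 < Cmod z ^ 4) by (apply pow_lt; lra). lra. }
  pose proof (series_norm_bound _ _ b Hs4) as NB.
  assert (NB' : Cmod (scal (/ z ^ 4)%C (h z - sum_n a 3)%C) <= 2 * (M * (4/3)^4 * 3)).
  { rewrite <- (is_series_unique _ _ Hb). apply NB. 2: eexists; exact Hb.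
    intros m. change (scal (/ z ^ 4)%C (a (4 + m)%nat)) with (Cmult (/ z ^ 4)%C (a (4 + m)%nat)).
    unfold a, b. rewrite !Cmod_mult, Cmod_inv, !Cmod_pow by auto.
    assert (P4 : 0 < Cmod z ^ 4) by (apply pow_lt; lra).
    replace (/ Cmod z ^ 4 * (Cmod z ^ (4 + m) * Cmod (e (4 + m)%nat)))
      with (Cmod z ^ m * Cmod (e (4 + m)%nat)) by (rewrite pow_add; field; lra).
    specialize (HM (4+m)%nat). rewrite pow_add in HM.
    replace (M * (4 / 3) ^ 4 * (2 / 3) ^ m) with ((1/2)^m * (M * ((4 / 3) ^ 4 * (4 / 3) ^ m)))
      by (assert (Em : (1/2)^m * (4/3)^m = (2/3)^m) by (rewrite <- Rpow_mult_distr; f_equal; field);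
          rewrite <- Em; ring).
    apply Rmult_le_compat. apply pow_le, Cmod_ge_0. apply Cmod_ge_0.
    apply pow_incr; split. apply Cmod_ge_0. lra. exact HM. }
  change (scal (/ z ^ 4)%C (h z - sum_n a 3)%C) with (Cmult (/ z ^ 4)%C (h z - sum_n a 3)%C) in NB'.
  rewrite Cmod_mult, Cmod_inv, Cmod_pow in NB' by auto.
  rewrite <- HS.
  assert (P4 : 0 < Cmod z ^ 4) by (apply pow_lt; lra).
  apply (Rmult_le_compat_l (Cmod z ^ 4)) in NB'. 2: lra.
  rewrite <- Rmult_assoc, Rinv_r in NB' by lra. lra.
Qed.

Definition small (k : nat) (F : R -> C) : Prop :=
  exists K d, 0 < d /\ forall t, 0 < t < d -> Cmod (F t) <= K * t ^ k.

Lemma small_add k F G : small k F -> small k G -> small k (fun t => F t + G t)%C.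
Proof.
  intros [K1 [d1 [Hd1 H1]]] [K2 [d2 [Hd2 H2]]].
  exists (K1 + K2), (Rmin d1 d2). split. apply Rmin_pos; auto.
  intros t Ht. assert (t < d1) by (eapply Rlt_le_trans; [apply Ht| apply Rmin_l]).
  assert (t < d2) by (eapply Rlt_le_trans; [apply Ht| apply Rmin_r]).
  eapply Rle_trans. apply Cmod_triangle. rewrite Rmult_plus_distr_r.
  apply Rplus_le_compat; [apply H1 | apply H2]; lra.
Qed.

Lemma small_scal k c F : small k F -> small k (fun t => c * F t)%C.
Proof.
  intros [K1 [d1 [Hd1 H1]]]. exists (Cmod c * K1), d1. split; auto.
  intros t Ht. rewrite Cmod_mult, Rmult_assoc. apply Rmult_le_compat_l. apply Cmod_ge_0. auto.
Qed.

Lemma small_mul i j F G : small i F -> small j G -> small (i + j) (fun t => F t * G t)%C.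
Proof.
  intros [K1 [d1 [Hd1 H1]]] [K2 [d2 [Hd2 H2]]].
  exists (K1 * K2), (Rmin d1 d2). split. apply Rmin_pos; auto.
  intros t Ht. assert (t < d1) by (eapply Rlt_le_trans; [apply Ht| apply Rmin_l]).
  assert (t < d2) by (eapply Rlt_le_trans; [apply Ht| apply Rmin_r]).
  rewrite Cmod_mult, pow_add.
  replace (K1 * K2 * (t ^ i * t ^ j)) with ((K1 * t^i) * (K2 * t^j)) by ring.
  apply Rmult_le_compat; try apply Cmod_ge_0; [apply H1 | apply H2]; lra.
Qed.

Lemma small_weak m k F : (k <= m)%nat -> small m F -> small k F.
Proof.
  intros Hkm [K [d [Hd H]]]. exists K, (Rmin d 1). split. apply Rmin_pos; lra.
  intros t Ht. assert (t < d) by (eapply Rlt_le_trans; [apply Ht| apply Rmin_l]).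
  assert (t < 1) by (eapply Rlt_le_trans; [apply Ht| apply Rmin_r]).
  specialize (H t ltac:(lra)).
  assert (HK : 0 <= K).
  { assert (0 < t^m) by (apply pow_lt; lra). pose proof (Cmod_ge_0 (F t)).
    destruct (Rle_or_lt 0 K); auto. nra. }
  eapply Rle_trans. exact H. apply Rmult_le_compat_l; auto.
  replace m with (k + (m - k))%nat by lia. rewrite pow_add.
  assert (0 < t^k) by (apply pow_lt; lra).
  assert (t ^ (m - k) <= 1). { rewrite <- (pow1 (m-k)). apply pow_incr; lra. }
  assert (0 <= t ^ (m-k)) by (apply pow_le; lra). nra.
Qed.

Lemma small_mono k : small k (fun t => RtoC t ^ k)%C.
Proof.
  exists 1, 1. split. lra. intros t Ht. rewrite Cmod_pow, Cmod_R, Rabs_pos_eq by lra. lra.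
Qed.

Lemma small_const c : small 0 (fun _ => c).
Proof. exists (Cmod c), 1. split. lra. intros t Ht. simpl. lra. Qed.

Lemma small_ext k F G : (exists d, 0 < d /\ forall t, 0 < t < d -> F t = G t) ->
  small k F -> small k G.
Proof.
  intros [d0 [Hd0 E]] [K [d [Hd H]]]. exists K, (Rmin d d0). split. apply Rmin_pos; lra.
  intros t Ht. assert (t < d) by (eapply Rlt_le_trans; [apply Ht| apply Rmin_l]).
  assert (t < d0) by (eapply Rlt_le_trans; [apply Ht| apply Rmin_r]).
  rewrite <- E by lra. apply H. lra.
Qed.

Lemma small_div k F : small (S k) (fun t => RtoC t * F t)%C -> small k F.
Proof.
  intros [K [d [Hd H]]]. exists K, d. split; auto. intros t Ht.
  specialize (H t Ht). rewrite Cmod_mult, Cmod_R, Rabs_pos_eq in H by lra.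
  simpl in H. nra.
Qed.

Lemma real_zero x C d : 0 <= x -> 0 < d -> (forall t, 0 < t < d -> x <= C * t) -> x = 0.
Proof.
  intros Hx Hd H. destruct (Req_dec x 0); auto. exfalso.
  set (t := Rmin (d/2) (x / (2 * (Rabs C + 1)))).
  assert (Ht1 : 0 < t). { apply Rmin_pos. lra. apply Rdiv_lt_0_compat. lra. pose proof (Rabs_pos C). lra. }
  assert (Ht2 : t < d). { eapply Rle_lt_trans. apply Rmin_l. lra. }
  assert (Ht3 : t <= x / (2 * (Rabs C + 1))) by apply Rmin_r.
  specialize (H t (conj Ht1 Ht2)).
  assert (C * t <= Rabs C * t) by (apply Rmult_le_compat_r; [lra| apply Rle_abs]).
  pose proof (Rabs_pos C).
  assert ((Rabs C + 1) * t <= x / 2).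
  { apply (Rmult_le_compat_l (Rabs C + 1)) in Ht3. 2: lra.
    replace ((Rabs C + 1) * (x / (2 * (Rabs C + 1)))) with (x/2) in Ht3 by (field; lra). lra. }
  nra.
Qed.

Lemma small_zero p G : small 0 G -> small 1 (fun t => p + RtoC t * G t)%C -> p = 0%C.
Proof.
  intros [K1 [d1 [Hd1 H1]]] [K2 [d2 [Hd2 H2]]].
  apply Cmod_eq_0. apply (real_zero _ (K1 + K2) (Rmin d1 d2)). apply Cmod_ge_0. apply Rmin_pos; auto.
  intros t Ht. assert (t < d1) by (eapply Rlt_le_trans; [apply Ht| apply Rmin_l]).
  assert (t < d2) by (eapply Rlt_le_trans; [apply Ht| apply Rmin_r]).
  specialize (H1 t ltac:(lra)). specialize (H2 t ltac:(lra)). simpl in H1, H2.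
  replace p with ((p + RtoC t * G t) + - (RtoC t * G t))%C by ring.
  eapply Rle_trans. apply Cmod_triangle. rewrite Cmod_opp, Cmod_mult, Cmod_R, Rabs_pos_eq by lra.
  nra.
Qed.

Lemma small_poly0 (p : C) (G : R -> C) : small 0 G -> small 0 (fun t => p + RtoC t * G t)%C.
Proof.
  intros HG. apply small_add. apply small_const.
  apply (small_mul 0 0). apply (small_weak 1). lia.
  eapply small_ext. 2: apply (small_mono 1). exists 1. split. lra. intros t _. simpl. ring.
  auto.
Qed.

Lemma cubic_zero p0 p1 p2 p3 :
  small 4 (fun t => p0 + p1 * RtoC t + p2 * RtoC t ^ 2 + p3 * RtoC t ^ 3)%C ->
  p0 = 0%C /\ p1 = 0%C /\ p2 = 0%C /\ p3 = 0%C.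
Proof.
  intros H.
  assert (G3 : small 0 (fun t => p3)) by apply small_const.
  assert (G2 : small 0 (fun t => p2 + RtoC t * p3)%C) by (apply small_poly0; auto).
  assert (G1 : small 0 (fun t => p1 + RtoC t * (p2 + RtoC t * p3))%C) by (apply small_poly0; auto).
  assert (E0 : p0 = 0%C).
  { apply (small_zero _ _ G1). apply (small_weak 4). lia. eapply small_ext. 2: exact H.
    exists 1. split. lra. intros; simpl; ring. }
  assert (H1 : small 3 (fun t => p1 + RtoC t * (p2 + RtoC t * p3))%C).
  { apply small_div. eapply small_ext. 2: exact H. exists 1. split. lra. intros; simpl. rewrite E0; ring. }
  assert (E1 : p1 = 0%C).
  { apply (small_zero _ _ G2). apply (small_weak 3). lia. exact H1. }
  assert (H2 : small 2 (fun t => p2 + RtoC t * p3)%C).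
  { apply small_div. eapply small_ext. 2: exact H1. exists 1. split. lra. intros; simpl. rewrite E1; ring. }
  assert (E2 : p2 = 0%C).
  { apply (small_zero _ _ G3). apply (small_weak 2). lia. exact H2. }
  assert (H3 : small 1 (fun t => p3)%C).
  { apply small_div. eapply small_ext. 2: exact H2. exists 1. split. lra. intros; simpl. rewrite E2; ring. }
  assert (E3 : p3 = 0%C).
  { apply (small_zero _ (fun _ => 0%C)). apply small_const. eapply small_ext. 2: exact H3.
    exists 1. split. lra. intros; simpl; ring. }
  auto.
Qed.

Lemma T4small (h : C -> C) (e : nat -> C) : analytic_U h e ->
  small 4 (fun t => h (RtoC t) - (e 0%nat + e 1%nat * RtoC t + e 2%nat * RtoC t ^ 2 + e 3%nat * RtoC t ^ 3))%C.
Proof.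
  intros Ha. destruct (T4 _ _ Ha) as [K HK]. exists K, (1/2). split. lra.
  intros t Ht. specialize (HK (RtoC t)). rewrite Cmod_R, Rabs_pos_eq in HK by lra.
  apply HK. lra.
Qed.

Lemma coef_unique (h : C -> C) (c c' : nat -> C) : analytic_U h c -> analytic_U h c' ->
  c 2%nat = c' 2%nat /\ c 3%nat = c' 3%nat.
Proof.
  intros H1 H2. apply T4small in H1. apply T4small in H2.
  assert (S := small_add _ _ _ H1 (small_scal _ (-1)%C _ H2)).
  destruct (cubic_zero (c' 0%nat - c 0%nat) (c' 1%nat - c 1%nat) (c' 2%nat - c 2%nat) (c' 3%nat - c 3%nat))
    as [_ [_ [E2 E3]]].
  { eapply small_ext. 2: exact S. exists 1. split. lra. intros t _. ring. }
  split.
  - replace (c' 2%nat) with (c' 2%nat - c 2%nat + c 2%nat)%C by ring. rewrite E2. ring.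
  - replace (c' 3%nat) with (c' 3%nat - c 3%nat + c 3%nat)%C by ring. rewrite E3. ring.
Qed.

Lemma inverse_coefs (f g : C -> C) (a c : nat -> C) :
  analytic_U f a -> a 0%nat = 0%C -> a 1%nat = 1%C -> analytic_U g c ->
  (forall z : C, Cmod z < 1 -> Cmod (f z) < 1 -> g (f z) = z) ->
  c 2%nat = (- a 2%nat)%C /\ c 3%nat = (2 * a 2%nat * a 2%nat - a 3%nat)%C.
Proof.
  intros Hf Ha0 Ha1 Hg Hinv.
  set (F := fun t => f (RtoC t)).
  assert (Rf : small 4 (fun t => F t - (RtoC t + a 2%nat * RtoC t ^ 2 + a 3%nat * RtoC t ^ 3))%C).
  { eapply small_ext. 2: exact (T4small _ _ Hf). exists 1. split. lra. intros t _. unfold F.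
    rewrite Ha0, Ha1. ring. }
  assert (Su : small 3 (fun t => F t - RtoC t - a 2%nat * RtoC t ^ 2)%C).
  { eapply small_ext. 2: apply (small_add _ _ _ (small_scal _ (a 3%nat) _ (small_mono 3)) (small_weak 4 3 _ ltac:(lia) Rf)).
    exists 1. split. lra. intros t _. ring. }
  assert (SD : small 2 (fun t => F t - RtoC t)%C).
  { eapply small_ext. 2: apply (small_add _ _ _ (small_scal _ (a 2%nat) _ (small_mono 2)) (small_weak 3 2 _ ltac:(lia) Su)).
    exists 1. split. lra. intros t _. ring. }
  assert (SF : small 1 F).
  { eapply small_ext. 2: apply (small_add _ _ _ (small_mono 1) (small_weak 2 1 _ ltac:(lia) SD)).
    exists 1. split. lra. intros t _. simpl. ring. }
  destruct (T4 _ _ Hg) as [Kg HKg].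
  assert (SRg : small 4 (fun t => g (F t) - (c 0%nat + c 1%nat * F t + c 2%nat * F t ^ 2 + c 3%nat * F t ^ 3))%C
           /\ exists d, 0 < d /\ forall t, 0 < t < d -> g (F t) = RtoC t).
  { destruct SF as [K1 [d1 [Hd1 H1]]]. destruct SD as [K2 [d2 [Hd2 H2]]].
    set (d := Rmin (Rmin d1 d2) (Rmin (/ (2 * Rabs K1 + 2)) (/ (Rabs K2 + 1)))).
    assert (Hd : 0 < d).
    { pose proof (Rabs_pos K1); pose proof (Rabs_pos K2).
      apply Rmin_pos; apply Rmin_pos; auto; apply Rinv_0_lt_compat; lra. }
    assert (Hb : forall t, 0 < t < d -> 0 < Cmod (F t) <= Rabs K1 * t /\ Rabs K1 * t < 1/2).
    { intros t Ht.
      assert (t < d1). { eapply Rlt_le_trans. apply Ht. unfold d. eapply Rle_trans; apply Rmin_l. }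
      assert (t < d2). { eapply Rlt_le_trans. apply Ht. unfold d. eapply Rle_trans. apply Rmin_l. apply Rmin_r. }
      assert (t < / (2 * Rabs K1 + 2)). { eapply Rlt_le_trans. apply Ht. unfold d. eapply Rle_trans. apply Rmin_r. apply Rmin_l. }
      assert (t < / (Rabs K2 + 1)). { eapply Rlt_le_trans. apply Ht. unfold d. eapply Rle_trans; apply Rmin_r. }
      pose proof (Rabs_pos K1); pose proof (Rabs_pos K2).
      specialize (H1 t ltac:(lra)). specialize (H2 t ltac:(lra)). simpl in H1, H2.
      assert (K1 <= Rabs K1) by apply Rle_abs. assert (K2 <= Rabs K2) by apply Rle_abs.
      assert (A1 : Rabs K1 * t < 1/2).
      { apply (Rmult_lt_compat_l (2 * Rabs K1 + 2)) in H3. 2: lra.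
        rewrite Rinv_r in H3 by lra. nra. }
      assert (A2 : Rabs K2 * t < 1).
      { apply (Rmult_lt_compat_l (Rabs K2 + 1)) in H4. 2: lra.
        rewrite Rinv_r in H4 by lra. nra. }
      split; [split|]; auto.
      - destruct (Rle_or_lt (Cmod (F t)) 0) as [Hle|]; auto. exfalso.
        assert (F t = 0%C). { apply Cmod_eq_0. pose proof (Cmod_ge_0 (F t)). lra. }
        rewrite H9 in H2. replace (0 - RtoC t)%C with (- RtoC t)%C in H2 by ring.
        rewrite Cmod_opp, Cmod_R, Rabs_pos_eq in H2 by lra. nra.
      - nra. }
    split.
    - exists (Rabs Kg * Rabs K1 ^ 4), d. split; auto. intros t Ht.
      destruct (Hb t Ht) as [[B1 B2] B3].
      eapply Rle_trans. apply HKg. lra.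
      eapply Rle_trans. apply Rmult_le_compat_r. apply pow_le, Cmod_ge_0. apply Rle_abs.
      rewrite Rmult_assoc, <- Rpow_mult_distr. apply Rmult_le_compat_l. apply Rabs_pos.
      apply pow_incr. split. apply Cmod_ge_0. auto.
    - exists (Rmin d 1). split. apply Rmin_pos; lra. intros t Ht.
      assert (t < d) by (eapply Rlt_le_trans; [apply Ht| apply Rmin_l]).
      assert (t < 1) by (eapply Rlt_le_trans; [apply Ht| apply Rmin_r]).
      destruct (Hb t ltac:(lra)) as [[B1 B2] B3]. unfold F. apply Hinv.
      rewrite Cmod_R, Rabs_pos_eq; lra. fold (F t). lra. }
  destruct SRg as [SRg [dI [HdI HI]]].
  set (u := fun t => (F t - RtoC t - a 2%nat * RtoC t ^ 2)%C).
  assert (S2 : small 4 (fun t => F t ^ 2 - RtoC t ^ 2 - 2 * a 2%nat * RtoC t ^ 3)%C).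
  { assert (A : small 4 (fun t => a 2%nat * a 2%nat * RtoC t ^ 4 + 2 * (RtoC t ^ 1 * u t)
              + 2 * a 2%nat * (RtoC t ^ 2 * u t) + u t * u t)%C).
    { repeat apply small_add.
      - apply small_scal, small_mono.
      - apply small_scal. apply (small_mul 1 3). apply small_mono. exact Su.
      - apply small_scal. apply (small_weak 5). lia. apply (small_mul 2 3). apply small_mono. exact Su.
      - apply (small_weak 6). lia. apply (small_mul 3 3); exact Su. }
    eapply small_ext. 2: exact A. exists 1. split. lra. intros t _. unfold u. ring. }
  assert (S3 : small 4 (fun t => F t ^ 3 - RtoC t ^ 3)%C).
  { assert (A : small 4 (fun t => (F t - RtoC t) * (F t * F t + F t * RtoC t ^ 1 + RtoC t ^ 2))%C).
    { apply (small_mul 2 2). exact SD. repeat apply small_add.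
      apply (small_mul 1 1); exact SF. apply (small_mul 1 1). exact SF. apply small_mono. apply small_mono. }
    eapply small_ext. 2: exact A. exists 1. split. lra. intros t _. ring. }
  assert (Tot : small 4 (fun t => c 1%nat * (F t - (RtoC t + a 2%nat * RtoC t ^ 2 + a 3%nat * RtoC t ^ 3))
     + c 2%nat * (F t ^ 2 - RtoC t ^ 2 - 2 * a 2%nat * RtoC t ^ 3) + c 3%nat * (F t ^ 3 - RtoC t ^ 3)
     + (g (F t) - (c 0%nat + c 1%nat * F t + c 2%nat * F t ^ 2 + c 3%nat * F t ^ 3)))%C).
  { apply small_add. apply small_add. apply small_add.
    - apply small_scal; exact Rf.
    - apply small_scal; exact S2.
    - apply small_scal; exact S3.
    - exact SRg. }
  destruct (cubic_zero (c 0%nat) (c 1%nat - 1) (c 1%nat * a 2%nat + c 2%nat)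
     (c 1%nat * a 3%nat + 2 * c 2%nat * a 2%nat + c 3%nat)) as [E0 [E1 [E2 E3]]].
  { eapply small_ext. 2: exact (small_scal _ (-1)%C _ Tot). exists dI. split; auto.
    intros t Ht. rewrite HI by auto. ring. }
  assert (C1 : c 1%nat = 1%C). { replace (c 1%nat) with ((c 1%nat - 1) + 1)%C by ring. rewrite E1. ring. }
  rewrite C1 in E2, E3.
  assert (C2 : c 2%nat = (- a 2%nat)%C). { replace (c 2%nat) with ((1 * a 2%nat + c 2%nat) - a 2%nat)%C by ring. rewrite E2. ring. }
  split; auto. rewrite C2 in E3.
  replace (c 3%nat) with ((1 * a 3%nat + 2 * - a 2%nat * a 2%nat + c 3%nat) - a 3%nat + 2 * a 2%nat * a 2%nat)%C by ring.
  rewrite E3. ring.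
Qed.

Definition ex (x : R) : C := (cos x, sin x).

Lemma ex_mul x y : (ex x * ex y)%C = ex (x + y).
Proof. unfold ex, Cmult; simpl. rewrite cos_plus, sin_plus. f_equal; ring. Qed.

Lemma ex_conj x : Cconj (ex x) = ex (- x).
Proof. unfold ex, Cconj; simpl. rewrite cos_neg, sin_neg. reflexivity. Qed.

Lemma Cmod_ex x : Cmod (ex x) = 1.
Proof. unfold Cmod, ex; simpl. pose proof (sin2_cos2 x). unfold Rsqr in H.
  assert (E : cos x * (cos x * 1) + sin x * (sin x * 1) = 1) by nra. rewrite E. apply sqrt_1. Qed.

Lemma ex_period x k : ex (x + 2 * INR k * PI) = ex x.
Proof. unfold ex. rewrite cos_period, sin_period. reflexivity. Qed.

Lemma ex_0 : ex 0 = 1%C.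
Proof. unfold ex. rewrite cos_0, sin_0. reflexivity. Qed.

Lemma ex_pow x n : (ex x ^ n)%C = ex (INR n * x).
Proof.
  induction n.
  - simpl. rewrite Rmult_0_l, ex_0. reflexivity.
  - simpl Cpow. rewrite IHn, ex_mul, S_INR. f_equal. ring.
Qed.

Fixpoint csum (f : nat -> C) (n : nat) : C :=
  match n with O => 0%C | S n => (csum f n + f n)%C end.
Fixpoint rsum (f : nat -> R) (n : nat) : R :=
  match n with O => 0 | S n => rsum f n + f n end.

Lemma csum_ext f g n : (forall j, (j < n)%nat -> f j = g j) -> csum f n = csum g n.
Proof. induction n; simpl; intros; auto. rewrite IHn, H; auto. Qed.
Lemma rsum_ext f g n : (forall j, (j < n)%nat -> f j = g j) -> rsum f n = rsum g n.
Proof. induction n; simpl; intros; auto. rewrite IHn, H; auto. Qed.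

Lemma cos_lt_1 x : 0 < x < 2 * PI -> cos x < 1.
Proof.
  intros [H1 H2]. pose proof PI_RGT_0.
  destruct (Rle_or_lt x PI).
  - rewrite <- cos_0. apply cos_decreasing_1; lra.
  - rewrite <- cos_2PI. apply cos_increasing_1; lra.
Qed.

Definition th (N : nat) := 2 * PI / INR N.

Definition Ssum (N : nat) (n : nat) : C := csum (fun j => ex (INR (j * n) * th N)) N.

Lemma INR_N_pos (N : nat) (HN : (1 <= N)%nat) : 0 < INR N.
Proof. apply lt_0_INR. lia. Qed.

Lemma ex_mult_N (N : nat) (HN : (1 <= N)%nat) j q : ex (INR (j * (N * q)) * th N) = 1%C.
Proof.
  unfold th. pose proof (INR_N_pos N HN).
  replace (INR (j * (N * q)) * (2 * PI / INR N)) with (0 + 2 * INR (j * q) * PI).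
  rewrite ex_period, ex_0; auto.
  rewrite !mult_INR. field. lra.
Qed.

Lemma Ssum_div (N : nat) (HN : (1 <= N)%nat) n : (n mod N = 0)%nat -> Ssum N n = RtoC (INR N).
Proof.
  intros Hn. unfold Ssum. rewrite (Nat.div_mod_eq n N), Hn, Nat.add_0_r.
  rewrite (csum_ext _ (fun _ => 1%C)). 2: intros; apply (ex_mult_N N HN).
  clear. induction N as [|n IHn]. reflexivity. simpl csum. rewrite IHn, S_INR.
  unfold RtoC, Cplus; simpl. f_equal; ring.
Qed.

Lemma geom_C (z : C) n : ((1 - z) * csum (fun j => z ^ j) n = 1 - z ^ n)%C.
Proof.
  induction n. simpl. ring.
  simpl csum. rewrite Cmult_plus_distr_l, IHn. simpl. ring.
Qed.

Lemma Ssum_ndiv (N : nat) (HN : (1 <= N)%nat) n : (n mod N <> 0)%nat -> Ssum N n = 0%C.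
Proof.
  intros Hn. set (z := ex (INR n * th N)).
  assert (E : forall j, ex (INR (j * n) * th N) = (z ^ j)%C).
  { intros j. unfold z. rewrite ex_pow, mult_INR. f_equal. ring. }
  unfold Ssum. rewrite (csum_ext _ (fun j => z ^ j)%C) by (intros; apply E).
  assert (ZN : (z ^ N)%C = 1%C).
  { rewrite <- E. pose proof (ex_mult_N N HN 1 n) as H. rewrite Nat.mul_1_l in H. exact H. }
  assert (Z1 : z <> 1%C).
  { intros Hz. assert (Hc : cos (INR n * th N) = 1) by (unfold z, ex in Hz; injection Hz; auto).
    revert Hc. rewrite (Nat.div_mod_eq n N). set (r := (n mod N)%nat). set (q := (n / N)%nat).
    assert (Hr : (r < N)%nat) by (apply Nat.mod_upper_bound; lia).
    pose proof (INR_N_pos N HN).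
    replace (INR (N * q + r)%nat * th N) with (2 * PI * INR r / INR N + 2 * INR q * PI).
    2:{ unfold th. rewrite plus_INR, mult_INR. field. lra. }
    rewrite cos_period. apply Rlt_not_eq. apply cos_lt_1. pose proof PI_RGT_0.
    assert (0 < INR r) by (apply lt_0_INR; lia).
    assert (INR r < INR N) by (apply lt_INR; lia).
    split. apply Rdiv_lt_0_compat; nra.
    apply (Rmult_lt_reg_r (INR N)); auto. unfold Rdiv. rewrite Rmult_assoc, Rinv_l by lra. nra. }
  assert (H := geom_C z N). rewrite ZN in H.
  assert (H' : ((1 - z) * csum (fun j => z ^ j) N)%C = 0%C) by (rewrite H; ring).
  destruct (Ceq_dec (csum (fun j => z ^ j)%C N) 0%C) as [E0|E0]; auto. exfalso.
  assert (Z2 : (1 - z)%C <> 0%C). { intros Hz. apply Z1. replace z with (1 - (1 - z))%C by ring. rewrite Hz. ring. }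
  exact (Cmult_neq_0 _ _ Z2 E0 H').
Qed.

Lemma is_series_zero : is_series (fun _ : nat => 0) 0.
Proof.
  unfold is_series. apply filterlim_ext with (fun _ => 0).
  - intros n. induction n. rewrite sum_O. reflexivity. rewrite sum_Sn, <- IHn.
    symmetry. apply (@plus_zero_l R_AbelianMonoid).
  - apply filterlim_const.
Qed.

Lemma rsum_series (F : nat -> nat -> R) (s : nat -> R) n :
  (forall j, (j < n)%nat -> is_series (F j) (s j)) ->
  is_series (fun m => rsum (fun j => F j m) n) (rsum s n).
Proof.
  induction n; intros H; simpl.
  - apply is_series_zero.
  - apply (@is_series_plus R_AbsRing R_NormedModule). apply IHn. intros; apply H; lia. apply H; lia.
Qed.

Lemma tail_small (b : nat -> R) : ex_series b -> forall eps, 0 < eps ->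
  exists n0, forall n, (n0 <= n)%nat -> Series (fun m => b (n + m)%nat) <= eps.
Proof.
  intros Hb eps Heps.
  assert (L : is_lim_seq (sum_n b) (Series b)) by (apply Series_correct; exact Hb).
  apply is_lim_seq_spec in L. destruct (L (mkposreal eps Heps)) as [n0 Hn0].
  exists (S n0). intros n Hn. simpl in Hn0.
  rewrite (Series_incr_n b n) in L by (auto; lia).
  assert (E := Series_incr_n b n ltac:(lia) Hb).
  specialize (Hn0 (pred n) ltac:(lia)). rewrite sum_n_Reals in Hn0.
  apply Rabs_lt_between in Hn0. lra.
Qed.

Lemma rsum_Re (r : nat -> R) (z : C) (y : nat -> C) n :
  rsum (fun j => r j * Re (z * y j)%C) n = Re (z * csum (fun j => RtoC (r j) * y j) n)%C.
Proof.
  induction n; cbn [rsum csum].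
  - destruct z; simpl; ring.
  - rewrite IHn. destruct z, (y n), (csum (fun j : nat => (RtoC (r j) * y j)%C) n). simpl. ring.
Qed.

Lemma csum_lin (f g h : nat -> C) (c c' : C) n :
  csum (fun j => f j + /2 * (c * g j + c' * h j))%C n
  = (csum f n + /2 * (c * csum g n + c' * csum h n))%C.
Proof. induction n; simpl. field. rewrite IHn. field. Qed.

Lemma Cmod_csum f n : Cmod (csum f n) <= rsum (fun j => Cmod (f j)) n.
Proof.
  induction n; simpl. rewrite Cmod_0; lra.
  eapply Rle_trans. apply Cmod_triangle. lra.
Qed.

Lemma rsum_le f g n : (forall j, (j < n)%nat -> f j <= g j) -> rsum f n <= rsum g n.
Proof. induction n; simpl; intros; auto. lra. apply Rplus_le_compat. apply IHn; auto. apply H; lia. Qed.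

Lemma rsum_const (a : R) n : rsum (fun _ => a) n = a * INR n.
Proof. induction n; cbn [rsum]; auto. simpl; ring. rewrite IHn, S_INR. ring. Qed.

Lemma rsum_plus f g n : rsum (fun j => f j + g j) n = rsum f n + rsum g n.
Proof. induction n; cbn [rsum]; auto. ring. rewrite IHn. ring. Qed.

Lemma rsum_scal (a : R) f n : rsum (fun j => a * f j) n = a * rsum f n.
Proof. induction n; cbn [rsum]; auto. ring. rewrite IHn. ring. Qed.

Lemma rsum_Re_csum f n : rsum (fun j => Re (f j)) n = Re (csum f n).
Proof. induction n; simpl; auto. rewrite IHn. reflexivity. Qed.

Lemma Cmod_Ssum N n : Cmod (Ssum N n) <= INR N.
Proof.
  unfold Ssum. eapply Rle_trans. apply Cmod_csum.
  rewrite (rsum_ext _ (fun _ => 1)). rewrite rsum_const. lra.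
  intros; apply Cmod_ex.
Qed.

Lemma sum_two (t : nat -> R) k n : (1 <= k)%nat ->
  (forall m, (m <= n)%nat -> m <> 0%nat -> m <> k -> t m = 0) ->
  sum_f_R0 t n = t 0%nat + (if Nat.leb k n then t k else 0).
Proof.
  intros Hk H. induction n.
  - simpl. destruct k. lia. simpl. ring.
  - simpl sum_f_R0. rewrite IHn by (intros; apply H; lia).
    destruct (Nat.eq_dec (S n) k) as [E|E].
    + subst k. rewrite (proj2 (Nat.leb_nle (S n) n)) by lia. rewrite Nat.leb_refl. ring.
    + rewrite (H (S n)) by lia.
      destruct (Nat.leb k n) eqn:E1.
      * apply Nat.leb_le in E1. rewrite (proj2 (Nat.leb_le k (S n))) by lia. ring.
      * apply Nat.leb_nle in E1. rewrite (proj2 (Nat.leb_nle k (S n))) by lia. ring.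
Qed.

Lemma RtoC_Re y : RtoC (Re y) = (/ 2 * (y + Cconj y))%C.
Proof. destruct y as [a b]. apply injective_projections; simpl; field. Qed.

Lemma Cconj_mult x y : Cconj (x * y)%C = (Cconj x * Cconj y)%C.
Proof. destruct x, y. apply injective_projections; simpl; ring. Qed.

Lemma mod_ne0 N x : (0 < x < 2 * N)%nat -> x <> N -> (x mod N <> 0)%nat.
Proof.
  intros H1 H2 H3. assert (E := Nat.div_mod_eq x N). rewrite H3 in E.
  destruct (x / N)%nat as [|[|q]] eqn:Q; lia.
Qed.

Lemma unit_choice (v : C) : exists c : C, Cmod c = 1 /\ Re (c * v)%C = - Cmod v.
Proof.
  destruct (Req_dec (Cmod v) 0) as [E|E].
  - exists 1%C. split. apply Cmod_1. apply Cmod_eq_0 in E. rewrite E, Cmod_0. simpl. ring.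
  - destruct v as [x y]. set (m := Cmod (x, y)).
    assert (Hm : 0 < m) by (pose proof (Cmod_ge_0 (x,y)); unfold m; lra).
    assert (Hm2 : m * m = x * x + y * y).
    { unfold m, Cmod; simpl. rewrite sqrt_sqrt. ring. nra. }
    exists (- x / m, y / m). split.
    + unfold Cmod. cbn [fst snd].
      replace ((- x / m) ^ 2 + (y / m) ^ 2) with ((x * x + y * y) / (m * m)) by (field; lra).
      rewrite <- Hm2. replace (m * m / (m * m)) with 1 by (field; lra). apply sqrt_1.
    + simpl. fold m. replace (- x / m * x - y / m * y) with (- (x * x + y * y) / m) by (field; lra).
      rewrite <- Hm2. field. lra.
Qed.

Lemma core (V : nat -> C) (beta : R) (P : C -> R) (k : nat) :
  (1 <= k)%nat -> ex_series (fun m => Cmod (V m)) ->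
  (forall u, Cmod u = 1 -> is_series (fun m => Re (V m * u ^ m)%C) (P u) /\ beta < P u) ->
  Cmod (V k) <= 2 * (Re (V 0%nat) - beta).
Proof.
  intros Hk Hex HP.
  apply Rle_plus_epsilon. intros eps Heps.
  destruct (tail_small _ Hex (eps/4) ltac:(lra)) as [n0 Hn0].
  set (N := (n0 + 2*k + 1)%nat). set (L := (N - k)%nat).
  assert (HN : (1 <= N)%nat) by lia.
  assert (HNpos := INR_N_pos N HN).
  destruct (unit_choice (V k)) as [c [Hc1 Hc2]].
  set (th0 := th N).
  set (om := fun j:nat => ex (INR j * th0)).
  set (w := fun j:nat => 1 + Re (c * ex (INR (j * L) * th0))%C).
  assert (Hw : forall j, 0 <= w j).
  { intros j. unfold w. pose proof (re_le_Cmod (c * ex (INR (j * L) * th0))%C).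
    rewrite Cmod_mult, Hc1, Cmod_ex in H. rewrite Rmult_1_l in H. apply Rabs_le_between in H. lra. }
  set (T := rsum (fun j => w j * P (om j)) N).
  assert (HT : is_series (fun m => rsum (fun j => w j * Re (V m * om j ^ m)%C) N) T).
  { apply rsum_series. intros j _.
    assert (Hu : Cmod (om j) = 1) by apply Cmod_ex.
    destruct (HP _ Hu) as [Hs _].
    eapply is_series_ext. 2: exact (@is_series_scal R_AbsRing R_NormedModule (w j) _ _ Hs).
    intros m. reflexivity. }
  assert (HLmod : (L mod N <> 0)%nat). { rewrite Nat.mod_small by lia. lia. }
  assert (Tlow : beta * INR N <= T).
  { unfold T. eapply Rle_trans. 2: apply rsum_le.
    2:{ intros j _. apply Rmult_le_compat_l. apply Hw. left. apply HP. apply Cmod_ex. }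
    rewrite (rsum_ext _ (fun j => beta * w j)) by (intros; ring).
    rewrite rsum_scal. unfold w. rewrite rsum_plus, rsum_const.
    rewrite rsum_Re_csum.
    assert (E : csum (fun j => (c * ex (INR (j * L) * th0))%C) N = (c * Ssum N L)%C).
    { unfold Ssum. fold th0. generalize N. intros n. induction n. simpl. ring. cbn [csum]. rewrite IHn. ring. }
    rewrite E, (Ssum_ndiv N HN L HLmod), Cmult_0_r. simpl. lra. }
  set (A := fun m => (Ssum N m + / 2 * (c * Ssum N (m + L) + Cconj c * Ssum N (m + k)))%C).
  set (t := fun m => Re (V m * A m)%C).
  assert (Et : forall m, rsum (fun j => w j * Re (V m * om j ^ m)%C) N = t m).
  { intros m. rewrite rsum_Re. unfold t, A. f_equal. f_equal.
    unfold Ssum. rewrite <- csum_lin. apply csum_ext. intros j Hj.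
    unfold om, w. rewrite ex_pow.
    set (a := INR (j * m) * th0). set (b := INR (j * L) * th0).
    assert (Ea : INR m * (INR j * th0) = a) by (unfold a; rewrite mult_INR; ring).
    rewrite Ea. fold th0.
    assert (Eb : INR (j * (m + L)) * th0 = b + a) by (unfold a, b; rewrite !mult_INR, plus_INR; ring).
    assert (Ec : INR (j * (m + k)) * th0 = (- b + a) + 2 * INR j * PI).
    { unfold a, b, th0, th. rewrite !mult_INR, !plus_INR. unfold L. rewrite minus_INR by lia.
      field. lra. }
    rewrite Eb, Ec, ex_period. fold b.
    rewrite RtoC_plus, RtoC_Re, Cconj_mult, ex_conj.
    fold a. rewrite <- (ex_mul b a), <- (ex_mul (-b) a). ring. }
  assert (HT' : is_series t T) by (eapply is_series_ext; [intros m; apply Et| exact HT]).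
  apply is_series_unique in HT'.
  assert (A0 : A 0%nat = RtoC (INR N)).
  { unfold A. rewrite (Ssum_div N HN 0) by (apply Nat.Div0.mod_0_l; lia).
    rewrite (Ssum_ndiv N HN (0 + L)) by (simpl; auto).
    rewrite (Ssum_ndiv N HN (0 + k)) by (rewrite Nat.mod_small; lia). ring. }
  assert (Ak : A k = (/ 2 * (c * RtoC (INR N)))%C).
  { unfold A. rewrite (Ssum_ndiv N HN k) by (rewrite Nat.mod_small; lia).
    rewrite (Ssum_div N HN (k + L)) by (replace (k + L)%nat with N by lia; apply Nat.Div0.mod_same).
    rewrite (Ssum_ndiv N HN (k + k)) by (rewrite Nat.mod_small; lia). ring. }
  assert (Aother : forall m, (m < L)%nat -> m <> 0%nat -> m <> k -> A m = 0%C).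
  { intros m H1 H2 H3. unfold A. rewrite (Ssum_ndiv N HN m) by (rewrite Nat.mod_small; lia).
    rewrite (Ssum_ndiv N HN (m + L)) by (apply mod_ne0; lia).
    rewrite (Ssum_ndiv N HN (m + k)) by (rewrite Nat.mod_small; lia). ring. }
  assert (Abound : forall m, Cmod (A m) <= 2 * INR N).
  { intros m. unfold A. eapply Rle_trans. apply Cmod_triangle.
    rewrite Cmod_mult. eapply Rle_trans. apply Rplus_le_compat. apply Cmod_Ssum.
    apply Rmult_le_compat_l. apply Cmod_ge_0. eapply Rle_trans. apply Cmod_triangle.
    rewrite !Cmod_mult, Cmod_conj, Hc1, !Rmult_1_l. apply Rplus_le_compat; apply Cmod_Ssum.
    rewrite Cmod_inv, Cmod_R, Rabs_pos_eq by (try lra; intros E; injection E; lra). lra. }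
  assert (Hext : ex_series t) by (exists T; eapply is_series_ext; [intros m; apply Et| exact HT]).
  rewrite (Series_incr_n t L) in HT' by (auto; lia).
  rewrite (sum_two t k) in HT' by (auto; intros m Hm H0 Hk'; unfold t; rewrite Aother by lia; simpl; ring).
  rewrite (proj2 (Nat.leb_le k (pred L))) in HT' by lia.
  assert (t0v : t 0%nat = INR N * Re (V 0%nat)).
  { unfold t. rewrite A0. destruct (V 0%nat); simpl; ring. }
  assert (tkv : t k = INR N / 2 * (- Cmod (V k))).
  { unfold t. rewrite Ak. rewrite <- Hc2. destruct (V k), c; simpl. field. }
  assert (Ht1 : ex_series (fun i => Cmod (V (L + i)%nat))) by (apply (proj1 (ex_series_incr_n (fun m => Cmod (V m)) L)); exact Hex).
  assert (Ht2 : ex_series (fun i => 2 * INR N * Cmod (V (L + i)%nat))).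
  { apply (@ex_series_scal_l R_AbsRing R_NormedModule (2 * INR N)) in Ht1. exact Ht1. }
  assert (Htail : Rabs (Series (fun i => t (L + i)%nat)) <= 2 * INR N * (eps / 4)).
  { assert (B : forall i, Rabs (t (L + i)%nat) <= 2 * INR N * Cmod (V (L + i)%nat)).
    { intros i. unfold t. eapply Rle_trans. apply re_le_Cmod. rewrite Cmod_mult.
      rewrite Rmult_comm. apply Rmult_le_compat_r. apply Cmod_ge_0. apply Abound. }
    eapply Rle_trans. apply Series_Rabs.
    { apply (@ex_series_le R_AbsRing R_CompleteNormedModule _ _ ) with (2:=Ht2).
      intros i. unfold norm; simpl; unfold abs; simpl. rewrite Rabs_Rabsolu. apply B. }
    eapply Rle_trans. apply Series_le. 2: exact Ht2. intros i; split. apply Rabs_pos. apply B.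
    rewrite Series_scal_l. apply Rmult_le_compat_l. lra. apply Hn0. lia. }
  apply Rabs_le_between in Htail.
  rewrite t0v, tkv in HT'.
  assert (Hfin : INR N * (Cmod (V k) / 2) <= INR N * (Re (V 0%nat) - beta + eps / 2)) by nra.
  apply Rmult_le_reg_l in Hfin; lra.
Qed.

Lemma unit_conj u : Cmod u = 1 -> (Cconj u * u = 1)%C.
Proof.
  intros H. destruct u as [x y]. unfold Cmod in H. simpl in H.
  assert (E : x * (x * 1) + y * (y * 1) = 1).
  { rewrite <- (sqrt_sqrt (x * (x * 1) + y * (y * 1))). rewrite H. ring. nra. }
  apply injective_projections; simpl; nra.
Qed.

Lemma ray_derive (H : C -> C) (u : C) (t0 : R) (l : C) :
  Cmod u = 1 -> is_derive H (RtoC t0 * u)%C l ->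
  is_derive (fun t : R => Re (Cconj u * H (RtoC t * u)%C)%C) t0 (Re l).
Proof.
  intros Hu [_ HD]. split.
  - apply is_linear_scal_l.
  - intros x Hx. assert (Ex : t0 = x) by (apply (@is_filter_lim_locally_unique R_AbsRing R_NormedModule); exact Hx). subst x.
    intros eps. specialize (HD (RtoC t0 * u)%C (fun P HP => HP) eps).
    destruct HD as [d Hd]. exists d. intros y Hy.
    change (ball t0 d y) with (Rabs (y - t0) < d) in Hy.
    assert (Hb : Cmod (RtoC y * u - RtoC t0 * u)%C < d).
    { replace (RtoC y * u - RtoC t0 * u)%C with (RtoC (y - t0) * u)%C.
      rewrite Cmod_mult, Cmod_R, Hu. lra.
      apply injective_projections; simpl; ring. }
    specialize (Hd _ Hb).
    assert (Hd' : Cmod (H (RtoC y * u)%C - H (RtoC t0 * u)%C - (RtoC y * u - RtoC t0 * u) * l)%C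
                  <= eps * Cmod (RtoC y * u - RtoC t0 * u)%C) by exact Hd.
    replace (Cmod (RtoC y * u - RtoC t0 * u)%C) with (Rabs (y - t0)) in Hd'.
    2:{ replace (RtoC y * u - RtoC t0 * u)%C with (RtoC (y - t0) * u)%C.
      rewrite Cmod_mult, Cmod_R, Hu. ring. apply injective_projections; simpl; ring. }
    change (Rabs (Re (Cconj u * H (RtoC y * u)%C)%C - Re (Cconj u * H (RtoC t0 * u)%C)%C - (y - t0) * Re l)
      <= eps * Rabs (y - t0)).
    set (X := (H (RtoC y * u) - H (RtoC t0 * u) - (RtoC y * u - RtoC t0 * u) * l)%C) in *.
    assert (E : Re (Cconj u * H (RtoC y * u)%C)%C - Re (Cconj u * H (RtoC t0 * u)%C)%C - (y - t0) * Re l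
              = Re (Cconj u * X)%C).
    { unfold X. pose proof (unit_conj u Hu) as U.
      replace (Cconj u * (H (RtoC y * u) - H (RtoC t0 * u) - (RtoC y * u - RtoC t0 * u) * l))%C
        with (Cconj u * H (RtoC y * u) - Cconj u * H (RtoC t0 * u) - RtoC (y - t0) * (Cconj u * u) * l)%C.
      rewrite U. destruct (Cconj u * H (RtoC y * u))%C, (Cconj u * H (RtoC t0 * u))%C, l. simpl. ring.
      replace (RtoC (y - t0)) with (RtoC y - RtoC t0)%C. ring.
      apply injective_projections; simpl; ring. }
    rewrite E. eapply Rle_trans. apply re_le_Cmod. rewrite Cmod_mult, Cmod_conj, Hu, Rmult_1_l. exact Hd'.
Qed.

Lemma Re_RtoC_mult a w : Re (RtoC a * w)%C = a * Re w.
Proof. destruct w; simpl; ring. Qed.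

Lemma Cpow_mul (a b : C) m : ((a * b) ^ m = a ^ m * b ^ m)%C.
Proof. induction m; simpl. ring. rewrite IHm. ring. Qed.

Lemma RtoC_pow (r : R) m : (RtoC r ^ m)%C = RtoC (r ^ m).
Proof. induction m; simpl. reflexivity. rewrite IHm. apply injective_projections; simpl; ring. Qed.

Lemma radius_ge (h : C -> C) (d : nat -> C) (a : nat -> R) :
  analytic_U h d -> (forall m, Rabs (a m) <= Cmod (d m)) ->
  forall rho, 0 <= rho < 1 -> Rbar_le rho (CV_radius a).
Proof.
  intros Ha Hb rho Hr. destruct (CV_radius_bounded a) as [Hub _]. apply Hub.
  assert (Hc : Cmod (RtoC rho) < 1) by (rewrite Cmod_R, Rabs_pos_eq; lra).
  destruct (series_terms_bounded _ _ (Ha _ Hc)) as [M HM]. exists M. intros n.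
  specialize (HM n). change (scal (pow_n (RtoC rho) n) (d n)) with (Cmult (pow_n (RtoC rho) n) (d n)) in HM.
  rewrite pow_n_C, Cmod_mult, Cmod_pow, Cmod_R, Rabs_pos_eq in HM by lra.
  rewrite Rabs_mult, (Rabs_pos_eq (rho ^ n)) by (apply pow_le; lra).
  eapply Rle_trans. 2: exact HM. rewrite Rmult_comm. apply Rmult_le_compat_l. apply pow_le; lra. auto.
Qed.

Lemma radius_gt (h : C -> C) (d : nat -> C) (a : nat -> R) :
  analytic_U h d -> (forall m, Rabs (a m) <= Cmod (d m)) ->
  forall r, 0 <= r < 1 -> Rbar_lt (Rabs r) (CV_radius a).
Proof.
  intros Ha Hb r Hr. rewrite Rabs_pos_eq by lra.
  apply Rbar_lt_le_trans with (Finite ((1 + r) / 2)). simpl. lra.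
  apply (radius_ge h d a Ha Hb). lra.
Qed.

Lemma phi_series (lam r : R) (H H1 : C -> C) (d : nat -> C) (u : C) :
  0 < r < 1 -> analytic_U H d -> d 0%nat = 0%C ->
  (forall z, Cmod z < 1 -> is_derive H z (H1 z)) -> Cmod u = 1 ->
  is_series (fun m => Re (RtoC ((1 + lam * INR m) * r ^ m) * d (S m) * u ^ m)%C)
    ((1 - lam) * Re (H (RtoC r * u)%C / (RtoC r * u)%C)%C + lam * Re (H1 (RtoC r * u)%C)).
Proof.
  intros Hr Ha Hd0 HD Hu.
  set (z := (RtoC r * u)%C).
  assert (Hz : Cmod z = r) by (unfold z; rewrite Cmod_mult, Cmod_R, Hu, Rabs_pos_eq; lra).
  assert (Hz0 : z <> 0%C). { intros E. rewrite E, Cmod_0 in Hz. lra. }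
  assert (S1 : is_series (fun m => Re (RtoC (r ^ m) * d (S m) * u ^ m)%C) (Re (H z / z)%C)).
  { assert (Hs := Ha z ltac:(lra)). unfold is_pseries in Hs.
    assert (Hs1 : is_series (fun k => scal (pow_n z (S k)) (d (S k))) (H z)).
    { apply (is_series_incr_1 (fun k => scal (pow_n z k) (d k))).
      match goal with |- is_series _ ?x => replace x with (H z) end. exact Hs.
      rewrite Hd0. destruct (H z). apply injective_projections; simpl; ring. }
    apply (is_series_scal (/ z)%C) in Hs1. apply re_series in Hs1.
    eapply is_series_ext. 2: { replace (H z / z)%C with (scal (/ z)%C (H z)). exact Hs1.
      change (Cmult (/ z) (H z) = (H z / z)%C). unfold Cdiv. ring. }
    intros m. cbv beta. f_equal. change (Cmult (/ z) (Cmult (pow_n z (S m)) (d (S m))) = (RtoC (r ^ m) * d (S m) * u ^ m)%C).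
    rewrite pow_n_C. simpl Cpow. unfold z at 3. rewrite Cpow_mul, RtoC_pow. field. auto. }
  set (al := fun m => Re (Cconj u * d m * u ^ m)%C).
  set (F := fun t : R => Re (Cconj u * H (RtoC t * u)%C)%C).
  assert (HF : forall t, Rabs t < 1 -> PSeries al t = F t).
  { intros t Ht. assert (Hc : Cmod (RtoC t * u)%C < 1) by (rewrite Cmod_mult, Cmod_R, Hu; lra).
    assert (Hs := Ha _ Hc). unfold is_pseries in Hs.
    apply (is_series_scal (Cconj u)) in Hs. apply re_series in Hs.
    rewrite PSeries_eq. apply is_series_unique. eapply is_series_ext. 2: exact Hs.
    intros m. change (Re (Cmult (Cconj u) (Cmult (pow_n (RtoC t * u)%C m) (d m))) = pow_n t m * al m).
    rewrite pow_n_C, pow_n_pow, Cpow_mul, RtoC_pow. unfold al. rewrite <- Re_RtoC_mult. f_equal. ring. }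
  assert (Hal : forall m, Rabs (al m) <= Cmod (d m)).
  { intros m. unfold al. eapply Rle_trans. apply re_le_Cmod. rewrite !Cmod_mult, Cmod_conj, Cmod_pow, Hu, pow1. lra. }
  assert (Rad : Rbar_lt (Rabs r) (CV_radius al)) by (apply (radius_gt H d al Ha Hal); lra).
  assert (D1 : is_derive F r (PSeries (PS_derive al) r)).
  { eapply is_derive_ext_loc. 2: apply (is_derive_PSeries _ _ Rad).
    assert (He : 0 < 1 - r) by lra. exists (mkposreal _ He). intros t Ht.
    change (Rabs (t - r) < 1 - r) in Ht. apply HF. apply Rabs_lt_between in Ht.
    apply Rabs_lt_between. lra. }
  assert (D2 : is_derive F r (Re (H1 z))).
  { apply ray_derive. auto. apply HD. lra. }
  apply is_derive_unique in D1. apply is_derive_unique in D2. rewrite D1 in D2.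
  assert (S2 : is_series (fun m => INR (S m) * r ^ m * Re (d (S m) * u ^ m)%C) (Re (H1 z))).
  { rewrite <- D2. rewrite PSeries_eq. eapply is_series_ext. 2: apply Series_correct, (ex_pseries_derive _ _ Rad).
    intros m. change (pow_n r m * PS_derive al m = INR (S m) * r ^ m * Re (d (S m) * u ^ m)%C).
    rewrite pow_n_pow. unfold PS_derive, al. simpl Cpow.
    replace (Cconj u * d (S m) * (u * u ^ m))%C with ((Cconj u * u) * (d (S m) * u ^ m))%C by ring.
    rewrite unit_conj by auto. rewrite Cmult_1_l. ring. }
  apply (@is_series_scal R_AbsRing R_NormedModule (1 - lam)) in S1.
  apply (@is_series_scal R_AbsRing R_NormedModule lam) in S2.
  assert (S3 := @is_series_plus R_AbsRing R_NormedModule _ _ _ _ S1 S2).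
  eapply is_series_ext. 2: exact S3.
  intros m. change ((1 - lam) * Re (RtoC (r ^ m) * d (S m) * u ^ m)%C + lam * (INR (S m) * r ^ m * Re (d (S m) * u ^ m)%C)
    = Re (RtoC ((1 + lam * INR m) * r ^ m) * d (S m) * u ^ m)%C).
  rewrite <- !Cmult_assoc, !Re_RtoC_mult, S_INR. ring.
Qed.

Lemma lim_r2 X Y : 0 <= Y -> (forall r, 0 < r < 1 -> X * r ^ 2 <= Y) -> X <= Y.
Proof.
  intros HY H. destruct (Rle_or_lt X Y) as [|HXY]; auto. exfalso.
  assert (HX : 0 < X) by lra.
  set (r := 1 - (X - Y) / (4 * X)).
  assert (Hq : 0 <= (X - Y) / (4 * X) <= 1/4).
  { split. apply Rmult_le_pos. lra. left. apply Rinv_0_lt_compat. lra.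
    apply (Rmult_le_reg_r (4 * X)). lra. unfold Rdiv. rewrite Rmult_assoc, Rinv_l by lra. lra. }
  assert (Hq2 : 0 < (X - Y) / (4 * X)) by (apply Rdiv_lt_0_compat; lra).
  specialize (H r ltac:(unfold r; lra)).
  assert (E : X * (2 * r - 1) = (X + Y) / 2) by (unfold r; field; lra).
  assert (X * r ^ 2 >= X * (2 * r - 1)) by (simpl; nra). lra.
Qed.

Lemma J_re (lam : R) (H H1 H2 : C -> C) (z : C) : z <> 0%C ->
  Re (J_val 1%C lam 0 H H1 H2 z) = (1 - lam) * Re (H z / z)%C + lam * Re (H1 z).
Proof.
  intros Hz. unfold J_val, quot_z. destruct (Ceq_dec z 0%C) as [E|_]. contradiction.
  destruct (H z / z)%C, (H1 z), (H2 z), z. simpl. field.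
Qed.

Lemma thetaJ (lam beta : R) (h : C -> C) : 0 <= lam -> beta < 1 ->
  J_cond 1%C lam 0 0%nat beta h ->
  exists c, analytic_U h c /\ (1 + lam) * Cmod (c 2%nat) <= 2 * (1 - beta)
            /\ (1 + 2 * lam) * Cmod (c 3%nat) <= 2 * (1 - beta).
Proof.
  intros Hl Hb [c [H [H1 [H2 [Hh [HH [HD1 [_ HRe]]]]]]]].
  exists c. split; auto.
  set (d := rusch_coef 0 c) in *.
  assert (d0 : d 0%nat = 0%C) by reflexivity.
  assert (d1 : d 1%nat = 1%C) by reflexivity.
  assert (d2 : d 2%nat = c 2%nat).
  { unfold d, rusch_coef. simpl. replace (1 / (1 * 1)) with 1 by field. apply Cmult_1_l. }
  assert (d3 : d 3%nat = c 3%nat).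
  { unfold d, rusch_coef. simpl. replace ((1 + 1) / ((1 + 1) * 1)) with 1 by field. apply Cmult_1_l. }
  assert (Key : forall r, 0 < r < 1 -> forall k, (1 <= k)%nat ->
            Cmod (RtoC ((1 + lam * INR k) * r ^ k) * d (S k))%C <= 2 * (1 - beta)).
  { intros r Hr k Hk.
    set (V := fun m => (RtoC ((1 + lam * INR m) * r ^ m) * d (S m))%C).
    set (P := fun u => (1 - lam) * Re (H (RtoC r * u)%C / (RtoC r * u)%C)%C + lam * Re (H1 (RtoC r * u)%C)).
    assert (HV0 : Re (V 0%nat) = 1).
    { unfold V. rewrite d1. simpl. ring. }
    replace (2 * (1 - beta)) with (2 * (Re (V 0%nat) - beta)) by (rewrite HV0; ring). change (Cmod (V k) <= 2 * (Re (V 0%nat) - beta)).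
    apply (core V beta P k Hk).
    - set (be := fun m => Cmod (d m)).
      assert (Rad : Rbar_lt (Rabs r) (CV_radius (PS_derive be))).
      { rewrite CV_radius_derive. apply (radius_gt H d be HH). intros m. unfold be.
        rewrite Rabs_pos_eq. lra. apply Cmod_ge_0. lra. }
      assert (Hs := CV_disk_inside _ _ Rad).
      apply (@ex_series_scal_l R_AbsRing R_NormedModule (1 + lam)) in Hs.
      apply (@ex_series_le R_AbsRing R_CompleteNormedModule _ _ ) with (2:=Hs).
      intros m. unfold norm; simpl; unfold abs; simpl.
      rewrite (Rabs_pos_eq (Cmod (V m))) by apply Cmod_ge_0.
      change (scal (1 + lam) (Rabs (PS_derive be m * r ^ m))) with ((1 + lam) * (Rabs (PS_derive be m * r ^ m))).
      unfold V, PS_derive, be. rewrite Cmod_mult, Cmod_R.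
      assert (0 <= r ^ m) by (apply pow_le; lra). pose proof (pos_INR m).
      assert (0 <= Cmod (d (S m))) by apply Cmod_ge_0.
      rewrite (Rabs_pos_eq ((1 + lam * INR m) * r ^ m)) by (apply Rmult_le_pos; nra).
      rewrite (Rabs_pos_eq (INR (S m) * Cmod (d (S m)) * r ^ m)) by (apply Rmult_le_pos; auto; apply Rmult_le_pos; auto; apply pos_INR).
      rewrite S_INR. 
      assert (0 <= r ^ m * Cmod (d (S m))) by (apply Rmult_le_pos; auto).
      assert (1 + lam * INR m <= (1 + lam) * (INR m + 1)) by nra. nra.
    - intros u Hu. split.
      + apply phi_series; auto; lra.
      + assert (Hz : Cmod (RtoC r * u)%C < 1) by (rewrite Cmod_mult, Cmod_R, Hu, Rabs_pos_eq; lra).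
        specialize (HRe _ Hz). rewrite J_re in HRe. unfold P. lra.
        intros E. apply (f_equal Cmod) in E. rewrite Cmod_mult, Cmod_R, Hu, Cmod_0, Rabs_pos_eq in E; lra. }
  split.
  - apply lim_r2. lra. intros r Hr. specialize (Key r Hr 1%nat ltac:(lia)).
    rewrite d2, Cmod_mult, Cmod_R, Rabs_pos_eq in Key.
    2:{ simpl. apply Rmult_le_pos; [lra|]. lra. }
    simpl in Key. assert (0 <= Cmod (c 2%nat)) by apply Cmod_ge_0.
    simpl. nra.
  - apply lim_r2. lra. intros r Hr. specialize (Key r Hr 2%nat ltac:(lia)).
    rewrite d3, Cmod_mult, Cmod_R, Rabs_pos_eq in Key.
    2:{ simpl. apply Rmult_le_pos; [lra|]. nra. }
    simpl in Key. assert (0 <= Cmod (c 3%nat)) by apply Cmod_ge_0.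
    simpl. nra.
Qed.

Lemma div_le p x y : 0 < p -> p * x <= y -> x <= y / p.
Proof.
  intros Hp H. replace x with ((p * x) / p) by (field; lra).
  unfold Rdiv. apply Rmult_le_compat_r. left. apply Rinv_0_lt_compat; lra. exact H.
Qed.

Theorem corollary8 (lam beta : R) (f : C -> C) (a : nat -> C) :
  0 <= lam -> 0 <= beta < 1 ->
  in_Theta 1%C lam 0 0%nat beta f a ->
  Cmod (a 2%nat) <= Rmin (2 * (1 - beta) / (1 + lam))
                         (sqrt (2 * (1 - beta) / (1 + 2 * lam))) /\
  Cmod (a 3%nat) <= 2 * (1 - beta) / (1 + 2 * lam).
Proof.
  intros Hl [Hb0 Hb1] [g [HS [Jf Jg]]].
  destruct HS as [Haf [Ha0 [Ha1 [_ [_ [_ Hinv]]]]]].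
  destruct (thetaJ lam beta f Hl Hb1 Jf) as [cf [Hcf [Bf2 Bf3]]].
  destruct (coef_unique f a cf Haf Hcf) as [E2 E3].
  destruct (thetaJ lam beta g Hl Hb1 Jg) as [cg [Hcg [Bg2 Bg3]]].
  destruct (inverse_coefs f g a cg Haf Ha0 Ha1 Hcg Hinv) as [G2 G3].
  rewrite <- E2 in Bf2. rewrite <- E3 in Bf3. rewrite G3 in Bg3.
  assert (S3 : (1 + 2 * lam) * (2 * Cmod (a 2%nat) ^ 2) <= 4 * (1 - beta)).
  { assert (E : (2 * a 2%nat * a 2%nat)%C = (a 3%nat + (2 * a 2%nat * a 2%nat - a 3%nat))%C) by ring.
    assert (C2 : Cmod (2 * a 2%nat * a 2%nat)%C = 2 * Cmod (a 2%nat) ^ 2).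
    { rewrite !Cmod_mult, Cmod_R, Rabs_pos_eq by lra. simpl. ring. }
    rewrite <- C2, E. eapply Rle_trans. apply Rmult_le_compat_l. lra. apply Cmod_triangle. lra. }
  split; [apply Rmin_glb|].
  - apply div_le. lra. lra.
  - rewrite <- (sqrt_pow2 (Cmod (a 2%nat))) by apply Cmod_ge_0. apply sqrt_le_1_alt.
    apply div_le. lra. lra.
  - apply div_le. lra. lra.
Qed.
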